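(* Let $G$ be a connected graph. If $\sigma_2(G)\ge 2\widetilde{\alpha}(G)-2$, then $G$ is traceable (i.e., $G$ contains a path through every vertex).
   Context: All graphs are finite and simple. For a graph $G$ that is not complete, $\sigma_2(G)=\min\{d_G(u)+d_G(v): u,v\in V(G),\ u\ne v,\ uv\notin E(G)\}$; if $G$ is complete, $\sigma_2(G)=\infty$. An $(s,t)$-bipartite-hole in $G$ consists of two disjoint vertex sets $S,T\subseteq V(G)$ with $|S|=s$, $|T|=t$ and no edge of $G$ having one endpoint in $S$ and the other in $T$. The bipartite-hole-number $\widetilde{\alpha}(G)$ is the minimum integer $k$ such that there exist positive integers $s,t$ with $s+t=k+1$ for which $G$ contains no $(s,t)$-bipartite-hole. *)

(* Defs.v *)
(* A finite simple graph is a symmetric irreflexive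
   relation e on a finite type V. *)
From mathcomp Require Import all_boot.
Set Implicit Arguments. Unset Strict Implicit. Unset Printing Implicit Defensive.

Section Graph.
Variables (V : finType) (e : rel V).

Definition deg (v : V) : nat := #|[set u | e v u]|.

Definition complete : bool := [forall u, forall v, (u != v) ==> e u v].

(* sigma_2 with values in nat + {infinity}; None stands for infinity
   (the complete case). *)
Definition sigma2 : option nat :=
  if complete then None
  else Some (\big[minn/#|V|.*2]_(u | true) \big[minn/#|V|.*2]_(v | (u != v) && ~~ e u v)
               (deg u + deg v)).

Definition le_ext (k : nat) (o : option nat) : bool :=
  if o is Some s then k <= s else true.

Definition has_bhole (s t : nat) : bool :=
  [exists S : {set V}, exists T : {set V},
     [&& #|S| == s, #|T| == t, [disjoint S & T] &
         [forall x in S, forall y in T, ~~ e x y]]].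

Definition bhole_free (k : nat) : bool :=
  [exists s : 'I_k.+2, [&& 0 < (s : nat), (s : nat) <= k & ~~ has_bhole s (k.+1 - s)]].

Lemma bhole_free_exists : exists k, bhole_free k.
Proof.
exists #|V|.+1; apply/existsP.
have lt1 : 1 < #|V|.+3 by [].
exists (Ordinal lt1) => /=; rewrite /= subSS subn0.
apply/negP => /existsP [S] /existsP [T] /and4P [_ /eqP cT _ _].
by have := max_card T; rewrite cT ltnn.
Qed.

Definition bhn : nat := ex_minn bhole_free_exists.

Definition connected : Prop := forall x y : V, connect e x y.

Definition traceable : Prop :=
  exists s : seq V, [/\ uniq s, sorted e s & forall v : V, v \in s].

End Graph.

(* Main.v *)
Require Import Defs.
From mathcomp Require Import all_boot zify.
From Stdlib Require Import Classical.
Set Implicit Arguments. Unset Strict Implicit. Unset Printing Implicit Defensive.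

Section Prelim.
Variables (V : finType) (e : rel V).

Lemma bigmin_le_seq (I : eqType) (s : seq I) (P : pred I) (F : I -> nat) d j :
  j \in s -> P j -> \big[minn/d]_(i <- s | P i) F i <= F j.
Proof.
elim: s => // x s IH; rewrite inE big_cons => /orP [/eqP <- Pj|js Pj].
  by rewrite Pj geq_minl.
case: ifP => _; last exact: IH.
by rewrite geq_min IH ?orbT.
Qed.

Lemma le_bigmin_seq (I : eqType) (s : seq I) (P : pred I) (F : I -> nat) d k :
  k <= d -> (forall j, j \in s -> P j -> k <= F j) ->
  k <= \big[minn/d]_(i <- s | P i) F i.
Proof.
move=> kd; elim: s => [|x s IH] H; first by rewrite big_nil.
have H' : forall j, j \in s -> P j -> k <= F j.
  by move=> j js; apply: H; rewrite inE js orbT.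
rewrite big_cons; case: ifP => Px; last exact: IH.
by rewrite leq_min H ?inE ?eqxx //= IH.
Qed.

Lemma deg_le v : deg e v <= #|V|.
Proof. exact: max_card. Qed.

Lemma sigma2P k :
  le_ext k (sigma2 e) <->
  (forall u v, u != v -> ~~ e u v -> k <= deg e u + deg e v).
Proof.
rewrite /le_ext /sigma2; case: ifP => [/forallP Hc|Hnc].
  split=> // _ u v uv; have := Hc u => /forallP /(_ v); by rewrite uv /= => ->.
split.
  move=> Hk u v uv euv; apply: (leq_trans Hk).
  have h1 := @bigmin_le_seq V (index_enum V) (fun _ => true)
    (fun u => \big[minn/#|V|.*2]_(v | (u != v) && ~~ e u v) (deg e u + deg e v))
    #|V|.*2 u (mem_index_enum u) isT.
  apply: (leq_trans h1).
  by apply: bigmin_le_seq; rewrite ?mem_index_enum //= uv.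
move=> H.
have [u [v [uv euv]]] : exists u v, u != v /\ ~~ e u v.
  move/negbT: Hnc; rewrite /complete => /forallPn [u /forallPn [v]].
  by rewrite negb_imply => /andP [a b]; exists u, v.
have kd : k <= #|V|.*2.
  apply: (leq_trans (H u v uv euv)); rewrite -addnn leq_add ?deg_le //.
apply: le_bigmin_seq => // x _ _; apply: le_bigmin_seq => // y _ /andP [xy exy].
exact: H.
Qed.

End Prelim.
Set Implicit Arguments. Unset Strict Implicit. Unset Printing Implicit Defensive.

Section Holes.
Variables (V : finType).

Lemma sub_card_exact (S : {set V}) n : n <= #|S| ->
  exists S' : {set V}, S' \subset S /\ #|S'| = n.
Proof.
move=> nS; exists [set x in take n (enum S)]; split.
  apply/subsetP => x; rewrite inE => /mem_take; by rewrite mem_enum.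
rewrite cardsE; have/card_uniqP -> : uniq (take n (enum S)).
  by apply: take_uniq; apply: enum_uniq.
by rewrite size_take -cardE; case: ltngtP nS => // ->.
Qed.

Lemma has_bhole_ge (e : rel V) (S T : {set V}) s t :
  [disjoint S & T] -> (forall x y, x \in S -> y \in T -> ~~ e x y) ->
  s <= #|S| -> t <= #|T| -> has_bhole e s t.
Proof.
move=> dST nE sS tT.
have [S' [S'S cS']] := sub_card_exact sS.
have [T' [T'T cT']] := sub_card_exact tT.
apply/existsP; exists S'; apply/existsP; exists T'.
rewrite cS' cT' !eqxx /=; apply/andP; split.
  by apply: disjointWl S'S _; apply: disjointWr T'T _.
apply/forallP => x; apply/implyP => xS; apply/forallP => y; apply/implyP => yT.
by apply: nE; [apply: (subsetP S'S) | apply: (subsetP T'T)].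
Qed.

Lemma has_bholeP (e : rel V) s t : reflect
  (exists S T : {set V}, [/\ #|S| = s, #|T| = t, [disjoint S & T] &
      forall x y, x \in S -> y \in T -> ~~ e x y]) (has_bhole e s t).
Proof.
apply: (iffP idP).
  move=> /existsP [S /existsP [T /and4P [/eqP cS /eqP cT dST /forallP H]]].
  exists S, T; split => // x y xS yT.
  by have := H x; rewrite xS /= => /forallP /(_ y); rewrite yT.
move=> [S [T [cS cT dST H]]]; apply: (has_bhole_ge dST H); by rewrite ?cS ?cT.
Qed.

Lemma has_bhole_sym (e : rel V) (esym : symmetric e) s t :
  has_bhole e s t -> has_bhole e t s.
Proof.
move/has_bholeP => [S [T [cS cT dST H]]]; apply/has_bholeP; exists T, S.
split => //; first by rewrite disjoint_sym.
by move=> x y xT yS; rewrite esym; apply: H.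
Qed.

Lemma bhn_spec (e : rel V) : exists s0, [/\ 0 < s0, s0 <= bhn e &
  ~~ has_bhole e s0 ((bhn e).+1 - s0)].
Proof.
rewrite /bhn; case: ex_minnP => k /existsP [s /and3P [s0 sk nh]] _.
by exists s.
Qed.

Lemma bhn_mono (e e2 : rel V) : (forall x y, e x y -> e2 x y) -> bhn e2 <= bhn e.
Proof.
move=> sub; rewrite {2}/bhn; case: ex_minnP => k Hk _.
rewrite /bhn; case: ex_minnP => k2 _ Hmin; apply: Hmin.
move: Hk => /existsP [s /and3P [s0 sk nh]]; apply/existsP; exists s.
rewrite s0 sk /=; apply: contra nh => /has_bholeP [S [T [cS cT dST H]]].
apply/has_bholeP; exists S, T; split => // x y xS yT.
by apply: contra (H x y xS yT); apply: sub.
Qed.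

Lemma bhn_pos (e : rel V) : 0 < bhn e.
Proof. by have [s0 [a b _]] := bhn_spec e; apply: leq_trans b. Qed.

End Holes.
Set Implicit Arguments. Unset Strict Implicit. Unset Printing Implicit Defensive.

Section Core.
Variables (W : finType) (r : rel W) (w0 : W).
Hypotheses (rsym : symmetric r) (rirr : irreflexive r).
Variable s : seq W.
Hypotheses (Us : uniq s) (Ss : sorted r s).
Hypothesis NC : forall c, perm_eq c s -> ~~ cycle r c.

Let N := size s.
Let x i := nth w0 s i.
Let R := fun i j => r (x i) (x j).

Lemma adjR i : i.+1 < N -> R i i.+1 && R i.+1 i.
Proof.
move=> iN; have := (sortedP w0 Ss) i iN; rewrite /R /x => h.
by rewrite h rsym h.
Qed.

Lemma xinj i j : i < N -> j < N -> x i = x j -> i = j.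
Proof. by move=> iN jN /eqP; rewrite /x nth_uniq // => /eqP. Qed.

Lemma path_iota n : forall a b, b + n <= N -> (0 < n -> R a b) ->
  path R a (iota b n).
Proof.
elim: n => [|n IH] a b bn Rab //=.
rewrite Rab //=; apply: IH; first by lia.
by move=> n0; case/andP: (adjR (i:=b) ltac:(lia)).
Qed.

Lemma iotaSr b n : iota b n.+1 = rcons (iota b n) (b + n).
Proof. by rewrite -addn1 iotaD cats1. Qed.

Lemma path_rev_iota n : forall a b, b + n <= N -> (0 < n -> R a (b + n).-1) ->
  path R a (rev (iota b n)).
Proof.
elim: n => [|n IH] a b bn Rab; first by [].
rewrite iotaSr rev_rcons /=; have -> : b + n = (b + n.+1).-1 by lia.
rewrite Rab //=; apply: IH; first by lia.
move=> n0; have h : (b + n).-1.+1 < N by lia.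
have := adjR h; have -> : (b + n).-1.+1 = (b + n.+1).-1 by lia.
by case/andP.
Qed.

Lemma last_iota a b n : last a (iota b n.+1) = b + n.
Proof. by rewrite iotaSr last_rcons. Qed.

Lemma last_rev_iota a b n : last a (rev (iota b n.+1)) = b.
Proof. by rewrite /= rev_cons last_rcons. Qed.

Lemma nocyc l : perm_eq l (iota 0 N) -> ~~ cycle R l.
Proof.
move=> pl; have pm := perm_map x pl.
have e1 : [seq x i | i <- iota 0 N] = s by rewrite -[RHS](mkseq_nth w0).
rewrite e1 in pm; have := NC pm; by rewrite cycle_map.
Qed.


Lemma iota_split a b : a <= b -> b <= N ->
  iota 0 N = iota 0 a ++ iota a (b - a) ++ iota b (N - b).
Proof.
move=> ab bN.
have -> : N = a + ((b - a) + (N - b)) by lia.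
rewrite iotaD add0n iotaD; congr (_ ++ (_ ++ iota _ _)); lia.
Qed.

Hypothesis N2 : 1 < N.
Hypothesis nend : ~~ R 0 N.-1.

Definition inA i := (i < N) && R 0 i.
Definition inB j := (j < N) && R N.-1 j.

Lemma inA_range i : inA i -> 0 < i < N.-1.
Proof.
case/andP => iN Ri; case: i iN Ri => [|i] iN Ri; first by rewrite /R rirr in Ri.
apply/andP; split => //; case: (ltngtP i.+1 N.-1) => // h; first lia.
have ne := negbTE nend; by move: Ri; rewrite h ne.
Qed.

Lemma inB_range j : inB j -> 0 < j < N.-1.
Proof.
case/andP => jN Rj; case: j jN Rj => [|j] jN Rj.
  by have := nend; rewrite /R rsym; move: Rj; rewrite /R => ->.
apply/andP; split => //; case: (ltngtP j.+1 N.-1) => // h; first lia.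
by rewrite h /R rirr in Rj.
Qed.

Lemma Rsym i j : R i j = R j i.
Proof. by rewrite /R rsym. Qed.

Lemma cross i j : inA i -> inB j -> j.+1 = i -> False.
Proof.
move=> Ai Bj ji; have := inA_range Ai; have := inB_range Bj.
case/andP: Ai => _ RA; case/andP: Bj => _ RB => rj ri.
set l := iota 0 i ++ rev (iota i (N - i)).
have H1 : perm_eq l (iota 0 N).
  rewrite (iota_split (a := i) (b := N)) ?subnn /= ?cats0; try lia.
  by apply: perm_cat => //; rewrite perm_rev.
suff H2 : cycle R l by have := nocyc H1; rewrite H2.
rewrite (cycle_path 0) last_cat.
have -> : N - i = (N - i).-1.+1 by lia.
rewrite last_rev_iota cat_path; apply/andP; split.
  by apply: path_iota; [lia | rewrite Rsym].
have -> : i = j.+1 by [].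
rewrite last_iota add0n; apply: path_rev_iota; first lia.
move=> _; match goal with |- is_true (R _ ?t) => have -> : t = N.-1 by lia end; by rewrite Rsym.
Qed.


Ltac fixR := match goal with |- is_true (R _ ?t) => idtac end.

Lemma L1 i j : inA i -> inB j -> i <= j -> ~~ R i.-1 j.+1.
Proof.
move=> Ai Bj ij; have := inA_range Ai; have := inB_range Bj.
case/andP: Ai => _ RA; case/andP: Bj => _ RB => rj ri.
apply/negP => Rij.
set l := rev (iota 0 i) ++ (iota i (j.+1 - i) ++ rev (iota j.+1 (N - j.+1))).
have H1 : perm_eq l (iota 0 N).
  rewrite (iota_split (a := i) (b := j.+1)); try lia.
  by apply: perm_cat; [rewrite perm_rev | apply: perm_cat => //; rewrite perm_rev].
suff H2 : cycle R l by have := nocyc H1; rewrite H2.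
rewrite (cycle_path 0) !last_cat.
have -> : N - j.+1 = (N - j.+1).-1.+1 by lia.
rewrite last_rev_iota !cat_path; apply/and3P; split.
- apply: path_rev_iota; first lia.
  by move=> _; rewrite add0n Rsym.
- have -> : i = i.-1.+1 by lia.
  rewrite last_rev_iota; apply: path_iota; first lia.
  move=> _; have -> : i.-1.+1 = i by lia.
  by [].
- have -> : i = i.-1.+1 by lia.
  rewrite last_rev_iota.
  have -> : j.+1 - i.-1.+1 = (j - i).+1 by lia.
  rewrite last_iota; apply: path_rev_iota; first lia.
  move=> _; have -> : i.-1.+1 + (j - i) = j by lia.
  match goal with |- is_true (R _ ?t) => have -> : t = N.-1 by lia end.
  by rewrite Rsym.
Qed.

Lemma L2 i j : inA i -> inB j -> j.+1 < i -> ~~ R i.-1 j.-1.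
Proof.
move=> Ai Bj ij; have := inA_range Ai; have := inB_range Bj.
case/andP: Ai => _ RA; case/andP: Bj => _ RB => rj ri.
apply/negP => Rij.
set l := rev (iota j (i - j)) ++ (rev (iota i (N - i)) ++ iota 0 j).
have H1 : perm_eq l (iota 0 N).
  rewrite (iota_split (a := j) (b := i)); try lia.
  rewrite /l [rev _ ++ (_ ++ _)]catA perm_catC; apply: perm_cat => //.
  by apply: perm_cat; rewrite perm_rev.
suff H2 : cycle R l by have := nocyc H1; rewrite H2.
rewrite (cycle_path 0) !last_cat.
have -> : j = j.-1.+1 by lia.
rewrite last_iota add0n !cat_path; apply/and3P; split.
- apply: path_rev_iota; first lia.
  move=> _; match goal with |- is_true (R _ ?t) => have -> : t = i.-1 by lia end.
  by rewrite Rsym.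
- have -> : i - j = (i - j).-1.+1 by lia.
  rewrite last_rev_iota; apply: path_rev_iota; first lia.
  move=> _; match goal with |- is_true (R _ ?t) => have -> : t = N.-1 by lia end.
  by rewrite Rsym.
- have -> : i - j = (i - j).-1.+1 by lia.
  rewrite last_rev_iota.
  have -> : N - i = (N - i).-1.+1 by lia.
  rewrite last_rev_iota; apply: path_iota; first lia.
  by move=> _; rewrite Rsym.
Qed.

Lemma L3 i : inA i -> ~~ R N.-1 i.-1.
Proof.
move=> Ai; have := inA_range Ai.
case/andP: Ai => _ RA => ri.
apply/negP => Rij.
set l := rev (iota 0 i) ++ iota i (N - i).
have H1 : perm_eq l (iota 0 N).
  rewrite (iota_split (a := i) (b := N)) ?subnn /= ?cats0; try lia.
  by apply: perm_cat => //; rewrite perm_rev.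
suff H2 : cycle R l by have := nocyc H1; rewrite H2.
rewrite (cycle_path 0) !last_cat.
have -> : N - i = (N - i).-1.+1 by lia.
rewrite last_iota cat_path; apply/andP; split.
- apply: path_rev_iota; first lia.
  move=> _; match goal with |- is_true (R _ ?t) => have -> : t = i.-1 by lia end.
  match goal with |- is_true (R ?t _) => have -> : t = N.-1 by lia end.
  by [].
- have -> : i = i.-1.+1 by lia.
  rewrite last_rev_iota; apply: path_iota; first lia.
  move=> _; have -> : i.-1.+1 = i by lia.
  by [].
Qed.


Lemma card_split (T : finType) (A : {set T}) (P : pred T) :
  #|[set i in A | P i]| + #|[set i in A | ~~ P i]| = #|A|.
Proof.
rewrite -(cardsID [set i | P i] A); congr (_ + _); apply: eq_card => i;
by rewrite !inE // andbC.
Qed.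

Lemma disjP (T : finType) (S1 S2 : {set T}) :
  (forall y, y \in S1 -> y \in S2 -> False) -> [disjoint S1 & S2].
Proof.
move=> H; apply/pred0P => y /=; apply/negbTE/negP => /andP [a b]; exact: H a b.
Qed.

Variables (k s0 t0 : nat).
Hypotheses (st : s0 + t0 = k.+1) (s0p : 0 < s0) (t0p : 0 < t0).
Hypothesis degA : k <= #|[set i : 'I_N | inA i]|.
Hypothesis degB : k <= #|[set j : 'I_N | inB j]|.

Lemma core_hole : has_bhole r s0 t0.
Proof.
set A := [set i : 'I_N | inA i]; set B := [set j : 'I_N | inB j].
have dA : k <= #|A| := degA. have dB : k <= #|B| := degB.
pose f m := #|[set i in A | m <= nat_of_ord i]|.
pose g m := #|[set j in B | nat_of_ord j < m]|.
have P0 : s0 <= f 0.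
  rewrite /f; have -> : [set i in A | 0 <= nat_of_ord i] = A by apply/setP => i; rewrite !inE ?andbT.
  lia.
have ub : forall m, s0 <= f m -> m <= N.
  move=> m; rewrite /f; case: (leqP m N) => // mN.
  have -> : [set i in A | m <= nat_of_ord i] = set0.
    apply/setP => i; rewrite !inE; apply/negbTE; apply/negP => /andP [_ h]; have := ltn_ord i; lia.
  by rewrite cards0; lia.
have exP : exists m, s0 <= f m by exists 0.
case: (ex_maxnP exP ub) => m Pm maxm.
have fm1 : f m.+1 < s0 by rewrite ltnNge; apply/negP => /maxm; lia.
have inAv : forall i : 'I_N, i \in A -> inA i by move=> i; rewrite inE.
have inBv : forall j : 'I_N, j \in B -> inB j by move=> j; rewrite inE.
case: (leqP t0.-1 (g m)) => gm.
-
  pose S2 := [set x (nat_of_ord i).-1 | i in [set i in A | m <= nat_of_ord i]].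
  pose T2 := x N.-1 |: [set x (nat_of_ord j).-1 | j in [set j in B | nat_of_ord j < m]].
  have cS2 : #|S2| = f m.
    rewrite /S2 card_in_imset // => i i'; rewrite !inE => /andP [Ai _] /andP [Ai' _].
    have := inA_range Ai; have := inA_range Ai' => h1 h2.
    move/xinj => h; apply: val_inj; move: h; rewrite /=; lia.
  have cT2 : #|T2| = (g m).+1.
    rewrite /T2 cardsU1 card_in_imset.
      match goal with |- context [?a \notin ?S] => have nin : a \notin S; [| by rewrite nin add1n] end.
      apply/imsetP => [[j]]; rewrite !inE => /andP [Bj _] /xinj.
      have := inB_range Bj; lia.
    move=> j j'; rewrite !inE => /andP [Bj _] /andP [Bj' _].
    have := inB_range Bj; have := inB_range Bj' => h1 h2.
    move/xinj => h; apply: val_inj; move: h; rewrite /=; lia.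
  apply: (has_bhole_ge (S := S2) (T := T2)); last 2 first.
  + by rewrite cS2.
  + by rewrite cT2; lia.
  + apply: disjP => y /imsetP [i]; rewrite !inE => /andP [Ai mi] ->.
    have := inA_range Ai => ri.
    move=> /orP [/eqP /xinj|/imsetP [j]]; first by lia.
    rewrite !inE => /andP [Bj jm] /xinj; have := inB_range Bj; lia.
  + move=> y z /imsetP [i]; rewrite !inE => /andP [Ai mi] -> {y}.
    have := inA_range Ai => ri.
    move=> /orP [/eqP ->|/imsetP [j]].
      by rewrite rsym; exact: L3.
    rewrite !inE => /andP [Bj jm] -> {z}.
    case: (ltngtP j.+1 i) => h.
    * exact: L2.
    * by have := inB_range Bj; lia.
    * by case: (cross Ai Bj h).
-
  pose S1 := [set x (nat_of_ord i).-1 | i in [set i in A | nat_of_ord i <= m]].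
  pose T1 := [set x (nat_of_ord j).+1 | j in [set j in B | m <= nat_of_ord j]].
  have cS1 : #|S1| + f m.+1 = #|A|.
    rewrite /S1 card_in_imset.
      rewrite -(card_split A (fun i : 'I_N => nat_of_ord i <= m)); congr (_ + _).
      by apply: eq_card => i; rewrite !inE ltnNge.
    move=> i i'; rewrite !inE => /andP [Ai _] /andP [Ai' _].
    have := inA_range Ai; have := inA_range Ai' => h1 h2.
    move/xinj => h; apply: val_inj; move: h; rewrite /=; lia.
  have cT1 : #|T1| + g m = #|B|.
    rewrite /T1 card_in_imset.
      rewrite -(card_split B (fun j : 'I_N => m <= nat_of_ord j)); congr (_ + _).
      by apply: eq_card => j; rewrite !inE ltnNge.
    move=> j j'; rewrite !inE => /andP [Bj _] /andP [Bj' _].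
    have := inB_range Bj; have := inB_range Bj' => h1 h2.
    move/xinj => h; apply: val_inj; move: h; rewrite /=; lia.
  apply: has_bhole_sym => //.
  apply: (has_bhole_ge (S := S1) (T := T1)); last 2 first.
  + lia.
  + lia.
  + apply: disjP => y /imsetP [i]; rewrite !inE => /andP [Ai mi] ->.
    have := inA_range Ai => ri.
    case/imsetP => [j]; rewrite !inE => /andP [Bj jm] /xinj; have := inB_range Bj; lia.
  + move=> y z /imsetP [i]; rewrite !inE => /andP [Ai mi] -> {y}.
    case/imsetP => [j]; rewrite !inE => /andP [Bj jm] -> {z}.
    apply: L1 => //; lia.
Qed.

End Core.

Lemma core_final (W : finType) (r : rel W) (w0 : W) (rsym : symmetric r)
  (rirr : irreflexive r) (s : seq W) (Us : uniq s) (Ss : sorted r s)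
  (Alls : forall w, w \in s)
  (NC : forall c, perm_eq c s -> ~~ cycle r c)
  (N2 : 1 < size s) (nend : ~~ r (head w0 s) (last w0 s))
  (k s0 t0 : nat) (st : s0 + t0 = k.+1) (s0p : 0 < s0) (t0p : 0 < t0)
  (dA : k <= #|[set y | r (head w0 s) y]|)
  (dB : k <= #|[set y | r (last w0 s) y]|) :
  has_bhole r s0 t0.
Proof.
have cardidx : forall P : pred W,
    #|[set i : 'I_(size s) | P (nth w0 s i)]| = #|[set w | P w]|.
  move=> P; rewrite -(card_in_imset (f := fun i : 'I_(size s) => nth w0 s i)).
    apply: eq_card => w; rewrite inE; apply/imsetP/idP.
      by move=> [i]; rewrite inE => Pi ->.
    move=> Pw; have iw : index w s < size s by rewrite index_mem.
    exists (Ordinal iw); by rewrite ?inE nth_index.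
  move=> i j _ _ /eqP; rewrite nth_uniq // => /eqP; apply: val_inj.
have nend' : ~~ r (nth w0 s 0) (nth w0 s (size s).-1).
  by rewrite nth0 nth_last.
apply: (core_hole rsym rirr Us Ss NC N2 nend' st s0p t0p).
- have -> : [set i : 'I_(size s) | inA r w0 s i] =
            [set i : 'I_(size s) | r (nth w0 s 0) (nth w0 s i)].
    by apply/setP => i; rewrite !inE /inA ltn_ord.
  by rewrite (cardidx (fun w => r (nth w0 s 0) w)) nth0.
- have -> : [set j : 'I_(size s) | inB r w0 s j] =
            [set j : 'I_(size s) | r (nth w0 s (size s).-1) (nth w0 s j)].
    by apply/setP => i; rewrite !inE /inB ltn_ord.
  by rewrite (cardidx (fun w => r (nth w0 s (size s).-1) w)) nth_last.
Qed.
Set Implicit Arguments. Unset Strict Implicit. Unset Printing Implicit Defensive.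

Section Opt.
Variables (V : finType) (e : rel V).
Hypotheses (esym : symmetric e) (eirr : irreflexive e).

Definition eo (a b : option V) : bool :=
  match a, b with
  | Some x, Some y => e x y
  | None, Some _ => true
  | Some _, None => true
  | None, None => false
  end.

Lemma eo_sym : symmetric eo.
Proof. by case=> [x|] [y|] //=; rewrite esym. Qed.

Lemma eo_irr : irreflexive eo.
Proof. by case=> [x|] //=; rewrite eirr. Qed.

Lemma deg_eo u : #|[set y | eo (Some u) y]| = (deg e u).+1.
Proof.
have -> : [set y | eo (Some u) y] = None |: [set Some v | v in [set v | e u v]].
  apply/setP => [[y|]]; rewrite !inE //=.
  apply/idP/imsetP => [h|[v]]; first by exists y; rewrite ?inE.
  by rewrite inE => h [->].
rewrite cardsU1 card_imset; last exact: Some_inj.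
suff -> : None \notin [set Some v | v in [set v | e u v]] by rewrite add1n.
by apply/imsetP => [[v _]].
Qed.

Lemma nopt_map (c : seq (option V)) : None \notin c -> c = map Some (pmap id c).
Proof.
elim: c => [|[y|] c IH] //=; rewrite inE negb_or => /andP [_ h].
by rewrite -IH.
Qed.

Lemma cycle_trace (c : seq (option V)) : uniq c -> (forall w, w \in c) ->
  cycle eo c -> traceable e.
Proof.
move=> Uc Ac Cc.
set i := index None c.
have iN : i < size c by rewrite index_mem.
have take1 : take i.+1 c = rcons (take i c) None.
  by rewrite (take_nth None iN) nth_index.
set c' := drop i.+1 c ++ take i c.
have rc : rot i.+1 c = rcons c' None by rewrite /rot take1 /c' rcons_cat.
have Uc' : uniq (rcons c' None) by rewrite -rc rot_uniq.
have nN : None \notin c' by move: Uc'; rewrite rcons_uniq => /andP [].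
have Cc' : cycle eo (rcons c' None) by rewrite -rc rot_cycle.
have Sc' : sorted eo c'.
  move: Cc'; rewrite (cycle_path None) last_rcons /= rcons_path => /andP [h _].
  exact: path_sorted h.
exists (pmap id c'); split.
- have := Uc'; rewrite rcons_uniq => /andP [_]; rewrite {1}(nopt_map nN).
  by rewrite map_inj_uniq //; exact: Some_inj.
- by move: Sc'; rewrite {1}(nopt_map nN) sorted_map.
- move=> v; have : Some v \in rcons c' None by rewrite -rc mem_rot.
  rewrite mem_rcons inE /= {1}(nopt_map nN) mem_map //; exact: Some_inj.
Qed.

Lemma hole_back s0 t0 : 0 < s0 -> 0 < t0 -> has_bhole eo s0 t0 -> has_bhole e s0 t0.
Proof.
move=> s0p t0p /has_bholeP [S [T [cS cT dST H]]].
have nNS : None \notin S.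
  apply/negP => NS; have : 0 < #|T| by rewrite cT.
  case/card_gt0P => y yT; have := H _ _ NS yT; case: y yT => [y|] yT //.
  by move/disjoint_setI0: dST => /setP /(_ None); rewrite !inE NS yT.
have nNT : None \notin T.
  apply/negP => NT; have : 0 < #|S| by rewrite cS.
  case/card_gt0P => y yS; have := H _ _ yS NT; case: y yS => [y|] yS //.
  by move/disjoint_setI0: dST => /setP /(_ None); rewrite !inE NT yS.
have back : forall X : {set option V}, None \notin X ->
    X = [set Some v | v in [set v | Some v \in X]].
  move=> X nX; apply/setP => [[y|]]; rewrite ?(negbTE nX).
    apply/idP/imsetP => [h|[v]]; first by exists y; rewrite ?inE.
    by rewrite inE => h [->].
  by symmetry; apply/negbTE/imsetP => [[v]].
apply: (has_bhole_ge (S := [set v | Some v \in S]) (T := [set v | Some v \in T])).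
- apply/pred0P => v /=; rewrite !inE; apply/negbTE/negP => /andP [a b].
  by move/disjoint_setI0: dST => /setP /(_ (Some v)); rewrite !inE a b.
- by move=> a b; rewrite !inE => aS bT; exact: (H _ _ aS bT).
- by rewrite -cS {1}(back S nNS) card_imset //; exact: Some_inj.
- by rewrite -cT {1}(back T nNT) card_imset //; exact: Some_inj.
Qed.

End Opt.
Set Implicit Arguments. Unset Strict Implicit. Unset Printing Implicit Defensive.

Section Build.
Variables (V : finType) (e : rel V).
Hypotheses (esym : symmetric e) (eirr : irreflexive e).

Definition euv (u v : V) : rel V :=
  fun x y => e x y || ((x == u) && (y == v)) || ((x == v) && (y == u)).

Lemma head_rev' (x : V) s : head x (rev s) = last x s.
Proof. by case/lastP: s => [|s y] //; rewrite rev_rcons last_rcons. Qed.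

Lemma last_rev' (x : V) s : last x (rev s) = head x s.
Proof. by case: s => [|y s] //; rewrite rev_cons last_rcons. Qed.

Lemma split_path u v : u != v -> forall t x, uniq (x :: t) -> path (euv u v) x t ->
  path e x t \/ exists p1 p2, [/\ x :: t = p1 ++ p2, (p1 != [::]) && (p2 != [::]),
    sorted e p1, sorted e p2 &
    ((last u p1 == u) && (head u p2 == v)) || ((last u p1 == v) && (head u p2 == u))].
Proof.
move=> uv; elim => [|y t IH] x //=; first by left.
rewrite [uniq _]/= => /andP [xn Uyt] /andP [exy Pyt].
have [exy'|nexy] := boolP (e x y).
  case: (IH y Uyt Pyt) => [h|[p1 [p2 [eq /andP [p1n p2n] S1 S2 C]]]].
    by left.
  right; exists (x :: p1), p2; split => //.
  - by rewrite eq.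
  - case: p1 eq p1n S1 {C} => [|z p1] //= [<- _] _ S1.
    by rewrite /= ?exy'.
  - by case: p1 p1n C {eq S1}.
right; exists [:: x], (y :: t); split => //.
- case: (IH y Uyt Pyt) => // [[p1 [p2 [eq /andP [p1n p2n] S1 S2 C]]]].
  exfalso; move: exy; rewrite /euv (negbTE nexy) /= => hxy.
  have memp : forall z, z \in p1 ++ p2 -> z \in y :: t by move=> z; rewrite -eq.
  have la : last u p1 \in y :: t.
    by apply: memp; rewrite mem_cat; case: p1 p1n {eq S1 C} => // z p1 _; rewrite /= mem_last.
  have hb : head u p2 \in y :: t.
    by apply: memp; rewrite mem_cat; case: p2 p2n {eq S2 C} => // z p2 _; rewrite inE eqxx orbT.
  have uin : (u \in y :: t) && (v \in y :: t).
    by case/orP: C => /andP [/eqP a /eqP b]; move: la hb; rewrite a b => -> ->.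
  case/andP: uin => uin vin.
  case/orP: hxy => /andP [/eqP xu _]; move: xn; by rewrite xu ?uin ?vin.
- move: exy; rewrite /euv (negbTE nexy) /=.
  by case/orP => /andP [/eqP -> /eqP ->]; rewrite !eqxx ?orbT.
Qed.


Lemma sorted_opt l1 l2 : sorted e l1 -> sorted e l2 ->
  sorted (eo e) (map Some l1 ++ None :: map Some l2).
Proof.
have tail : path (eo e) None (map Some l2) = sorted e l2.
  by case: l2 => [|y l2] //=; rewrite (path_map (e' := eo e)).
case: l1 => [|a l1] /= S1 S2; first by rewrite tail.
rewrite cat_path (path_map (e' := eo e)); apply/andP; split; first exact: S1.
by rewrite last_map /= tail.
Qed.

Lemma build_opt (d : V) p1 p2 : uniq (p1 ++ p2) -> (forall w, w \in p1 ++ p2) ->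
  sorted e p1 -> sorted e p2 -> p1 != [::] -> p2 != [::] ->
  let q := map Some (rev p1) ++ None :: map Some (rev p2) in
  [/\ uniq q, sorted (eo e) q, (forall w, w \in q), 1 < size q &
     (head None q = Some (last d p1) /\ last None q = Some (head d p2))].
Proof.
move=> U A S1 S2 p1n p2n q; split.
- rewrite /q cat_uniq /= !map_inj_uniq ?rev_uniq; try exact: Some_inj.
  move: U; rewrite cat_uniq => /and3P [-> H ->]; rewrite andbT /=.
  have -> : None \notin [seq Some i | i <- rev p2] by apply/mapP => [[z]].
  rewrite negb_or andbT; apply/andP; split; first by apply/mapP => [[z]].
  apply/hasPn => [[z|]] /=; last by move/mapP => [? _].
  move/mapP => [a]; rewrite mem_rev => ap2 [->]; apply/negP => /mapP [b].
  rewrite mem_rev => bp1 [eab]; move/hasPn: H => /(_ a ap2); by rewrite eab bp1.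
- by apply: sorted_opt; rewrite rev_sorted; apply: sub_sorted S1 || apply: sub_sorted S2;
     move=> a b; rewrite esym.
- move=> [w|]; last by rewrite /q mem_cat inE eqxx orbT.
  have := A w; rewrite /q mem_cat => /orP [h|h]; rewrite mem_cat inE /=.
    by rewrite !(mem_map Some_inj) !mem_rev h.
  by rewrite !(mem_map Some_inj) !mem_rev h !orbT.
- have : 0 < size p1 by rewrite lt0n size_eq0.
  rewrite /q size_cat /= size_map size_rev; lia.
- have lastS : forall l : seq V, l != [::] -> last None (map Some l) = Some (last d l).
    by case=> [|c l] // _; rewrite /= last_map.
  split.
    rewrite /q -nth0 nth_cat size_map size_rev.
    have -> : 0 < size p1 by rewrite lt0n size_eq0.
    by rewrite (nth_map d) ?size_rev ?nth0 ?head_rev' // lt0n size_eq0.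
  rewrite /q last_cat /= lastS ?last_rev' //.
  by rewrite -size_eq0 size_rev size_eq0.
Qed.
End Build.
Set Implicit Arguments. Unset Strict Implicit. Unset Printing Implicit Defensive.

Section Cliques.
Variables (V : finType) (e : rel V).
Hypotheses (esym : symmetric e) (eirr : irreflexive e).

Lemma clique_path x l : uniq (x :: l) ->
  (forall a b, a \in x :: l -> b \in x :: l -> a != b -> e a b) -> path e x l.
Proof.
elim: l x => [|y l IH] x //= /andP [xn /andP [yn Ul]] H.
rewrite H ?inE ?eqxx ?orbT //=.
  apply: IH; first by rewrite /= yn.
  by move=> a b ai bi; apply: H; rewrite inE ?ai ?bi orbT.
by apply/eqP => xy; move: xn; rewrite xy inE eqxx.
Qed.

Lemma clique_sorted l : uniq l ->
  (forall a b, a \in l -> b \in l -> a != b -> e a b) -> sorted e l.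
Proof. by case: l => [|x l] //; apply: clique_path. Qed.

Lemma cross_edge (L : {set V}) x y : connect e x y -> x \in L -> y \notin L ->
  exists l c, [/\ l \in L, c \notin L & e l c].
Proof.
move/connectP => [p Pp ->]; elim: p x Pp => [|z p IH] x /=; first by move=> _ xL /negP.
move=> /andP [exz Pp] xL yL.
case: (boolP (z \in L)) => zL; first exact: (IH z Pp zL yL).
by exists x, z.
Qed.

Lemma two_cliques (L : {set V}) : connected e ->
  (forall a b, a \in L -> b \in L -> a != b -> e a b) ->
  (forall a b, a \notin L -> b \notin L -> a != b -> e a b) -> traceable e.
Proof.
move=> conn HL HC.
case: (boolP [exists l, exists c, [&& l \in L, c \notin L & e l c]]).
  move=> /existsP [l /existsP [c /and3P [lL cL elc]]].
  set s1 := rcons (rem l (enum L)) l.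
  set s2 := c :: rem c (enum (~: L)).
  have m1 : forall z, z \in s1 = (z \in L).
    move=> z; rewrite /s1 mem_rcons inE; case: (eqVneq z l) => [->|zl] //=.
    by rewrite (mem_rem_uniq _ (enum_uniq _)) inE zl mem_enum.
  have m2 : forall z, z \in s2 = (z \notin L).
    move=> z; rewrite /s2 inE; case: (eqVneq z c) => [->|zc] //=.
    by rewrite (mem_rem_uniq _ (enum_uniq _)) inE zc mem_enum inE.
  have u1 : uniq s1.
    by rewrite /s1 rcons_uniq mem_rem_uniqF ?enum_uniq // rem_uniq // enum_uniq.
  have u2 : uniq s2.
    by rewrite /s2 /= mem_rem_uniqF ?enum_uniq // rem_uniq // enum_uniq.
  exists (s1 ++ s2); split.
  - rewrite cat_uniq u1 u2 andbT; apply/hasPn => z; rewrite m2 => zn.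
    by rewrite m1.
  - move: (m1) (u1); rewrite /sorted /s1; case: (rem l (enum L)) => [|a t] m1' u1' /=.
      rewrite elc /=; apply: (clique_path (l := rem c (enum (~: L)))) => //.
      by move=> a b; rewrite -/s2 !m2; apply: HC.
    rewrite cat_path; apply/andP; split.
      apply: clique_path; first exact: u1'.
      move=> a' b' ha hb; apply: HL; rewrite -m1'; [exact: ha | exact: hb].
    rewrite last_rcons /= elc /=; apply: (clique_path (l := rem c (enum (~: L)))) => //.
    by move=> a' b'; rewrite -/s2 !m2; apply: HC.
  - by move=> v; rewrite mem_cat m1 m2; case: (v \in L).
move=> nocr.
have all1 : (forall z, z \in L) \/ (forall z, z \notin L).
  case: (boolP [exists z, z \in L]) => [/existsP [z zL]|/existsPn h]; last by right.
  left => y; apply/negPn/negP => yL.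
  have [l [c [lL cL elc]]] := cross_edge (conn z y) zL yL.
  move/negP: nocr; apply; apply/existsP; exists l; apply/existsP; exists c.
  by rewrite lL cL elc.
exists (enum V); split; [exact: enum_uniq | | by move=> v; rewrite mem_enum].
apply: clique_sorted; first exact: enum_uniq.
case: all1 => h a b _ _; [apply: HL | apply: HC]; exact: h.
Qed.

End Cliques.
Set Implicit Arguments. Unset Strict Implicit. Unset Printing Implicit Defensive.

Definition nonedge (V : finType) (e : rel V) :=
  [set p : V * V | (p.1 != p.2) && ~~ e p.1 p.2].

Lemma main_gen (V : finType) : forall n (e : rel V), #|nonedge e| = n ->
  symmetric e -> irreflexive e -> connected e ->
  (forall u v, u != v -> ~~ e u v -> 2 * bhn e - 2 <= deg e u + deg e v) ->
  traceable e.
Proof.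
elim/ltn_ind => n IH e Hn esym eirr conn Hs.
case: (classic (traceable e)) => // NT.
have kpos := bhn_pos e.
set k := bhn e in Hs kpos.
case: (boolP [exists u, exists v, [&& u != v, ~~ e u v, k.-1 <= deg e u & k.-1 <= deg e v]]).
- move=> /existsP [u /existsP [v /and4P [uv neuv du dv]]].
  set e2 := euv e u v.
  have sub2 : forall x y, e x y -> e2 x y by move=> x y h; rewrite /e2 /euv h.
  have T2 : traceable e2.
    apply: (IH #|nonedge e2|) => //.
    + rewrite -Hn; apply: proper_card; apply/properP; split.
        apply/subsetP => [[a b]]; rewrite !inE /= => /andP [-> h] /=.
        by apply: contra h; apply: sub2.
      exists (u, v); first by rewrite !inE /= uv neuv.
      rewrite !inE /= negb_and negbK; apply/orP; right.
      by rewrite /e2 /euv !eqxx /= orbT.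
    + move=> a b; rewrite /e2 /euv esym; case: (e b a) => //=.
      by case: (a == u); case: (a == v); case: (b == u); case: (b == v).
    + move=> a; rewrite /e2 /euv eirr /=; apply/negbTE; rewrite negb_or.
      apply/andP; split; apply/negP => /andP [/eqP -> /eqP h]; move: uv;
        by rewrite h eqxx.
    + move=> a b; apply: (connect_sub (e := e)) => // c d h; apply: connect1.
      exact: sub2.
    + move=> a b ab nab.
      have nab' : ~~ e a b by apply: contra nab; apply: sub2.
      have bm := bhn_mono sub2.
      have dsub : forall z, deg e z <= deg e2 z.
        move=> z; apply: subset_leq_card; apply/subsetP => w; rewrite !inE.
        exact: sub2.
      have := Hs a b ab nab'; have := dsub a; have := dsub b; rewrite -/k in bm; lia.
  case: T2 => s [Us Ss As].
  case: s Us Ss As => [|x t] Us Ss As; first by have := As u.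
  case: (split_path (e := e) uv Us Ss) => [h|[p1 [p2 [eq /andP [p1n p2n] S1 S2 C]]]].
    by case: NT; exists (x :: t).
  have U12 : uniq (p1 ++ p2) by rewrite -eq.
  have A12 : forall w, w \in p1 ++ p2 by move=> w; rewrite -eq.
  have [Uq Sq Aq Sz [Hh Hl]] := build_opt esym u U12 A12 S1 S2 p1n p2n.
  set q := [seq Some i | i <- rev p1] ++ None :: [seq Some i | i <- rev p2] in Uq Sq Aq Sz Hh Hl.
  have [s0 [s0p s0k nh]] := bhn_spec e.
  rewrite -/k in s0k nh.
  have NC : forall c, perm_eq c q -> ~~ cycle (eo e) c.
    move=> c pc; apply/negP => Cc; apply: NT; apply: (cycle_trace (c := c)) => //.
      by rewrite (perm_uniq pc).
    by move=> w; rewrite (perm_mem pc).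
  have nend : ~~ eo e (head None q) (last None q).
    rewrite Hh Hl /=; case/orP: C => /andP [/eqP -> /eqP ->] //.
    by rewrite esym.
  have degab : forall a, (a == u) || (a == v) -> k <= #|[set y | eo e (Some a) y]|.
    move=> a /orP [/eqP ->|/eqP ->]; rewrite deg_eo -(prednK kpos) ltnS //.
  have dA : k <= #|[set y | eo e (head None q) y]|.
    by rewrite Hh; apply: degab; case/orP: C => /andP [-> _]; rewrite ?orbT.
  have dB : k <= #|[set y | eo e (last None q) y]|.
    by rewrite Hl; apply: degab; case/orP: C => /andP [_ ->]; rewrite ?orbT.
  have t0p : 0 < k.+1 - s0 by rewrite subn_gt0 ltnS.
  have st : s0 + (k.+1 - s0) = k.+1 by rewrite subnKC // ltnW // ltnS.
  have := core_final (eo_sym esym) (eo_irr eirr) Uq Sq Aq NC Sz nend st s0p t0p dA dB.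
  move/(hole_back s0p t0p) => hb.
  by move: nh; rewrite hb.
- move=> /existsPn nocase.
  apply: (two_cliques (L := [set z | deg e z < k.-1]) conn).
  + move=> a b; rewrite !inE => da db ab; apply/negPn/negP => nab.
    have := Hs a b ab nab; move: da db; clear.
    move: (deg e a) (deg e b) (bhn e) => x y z; lia.
  + move=> a b; rewrite !inE -!leqNgt => da db ab; apply/negPn/negP => nab.
    have := nocase a; move/existsPn => /(_ b); by rewrite ab nab da db.
Qed.

Theorem mainTheorem2 (V : finType) (e : rel V)
  (e_sym : symmetric e) (e_irr : irreflexive e)
  (Gconn : connected e)
  (Hsig : le_ext (2 * bhn e - 2) (sigma2 e)) :
  traceable e.
Proof.
apply: (@main_gen V #|nonedge e| e) => //.
by move/sigma2P: Hsig.
Qed.
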